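(* For a mutually orthogonal $d$-dimensional pure-state ensemble $\Omega = \{(1/k,|\psi_j\rangle)\}_{j=0}^{k-1}$, \[ \mathbf{C}_{\mathrm{MIO}}(\Omega) + \mathbf{S}(\Omega) \leq \log_2 d . \]
   Context: Fix the incoherent basis as the computational basis $\{|i\rangle\}$; incoherent states $\mathcal{I}$ are density matrices diagonal in this basis, and MIO (maximally incoherent operations) are the quantum channels mapping $\mathcal{I}$ into itself. The robustness of coherence is $C_R(\rho)=\min\{s\ge 0 : (\rho+s\tau)/(1+s)\in\mathcal{I} \text{ for some state } \tau\}$. For an ensemble $\Omega=\{(p_j,\rho_j)\}_{j=0}^{k-1}$ of states on a $d$-dimensional system $A$, the post-discrimination coherence is $\mathbf{C}_{\mathrm{MIO}}(\Omega)=\log_2(1+\eta)$ with $\eta=\max \sum_j p_j C_R(\sigma_j)$, the maximum taken over MIO channels $\mathcal{N}_{A\to BA'}$ ($\dim B=k$, $A'\cong A$) with $\sigma_j=\mathrm{tr}_B[\mathcal{N}(\rho_j)]$ and $\sum_j p_j \mathrm{tr}[\mathcal{N}(\rho_j)(|j\rangle\langle j|_B\otimes I_{A'})]=P_{\mathrm{suc}}(\Omega)$, where $P_{\mathrm{suc}}(\Omega)=\max_{\text{POVMs }\{E_j\}}\sum_j p_j\mathrm{tr}(E_j\rho_j)$ is the optimal (minimum-error) discrimination probability. The distinguishability is $\mathbf{S}(\Omega)=S(\hat\omega)$, the von Neumann entropy of the average state $\hat\omega=\sum_j p_j|\psi_j\rangle\langle\psi_j|$. *)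

(* Defs.v *)
From HB Require Import structures.
From mathcomp Require Import all_boot all_order all_algebra.
From mathcomp Require Import all_classical all_reals.
From mathcomp Require Import exp.
From mathcomp Require Import complex mxtens.

Set Implicit Arguments.
Unset Strict Implicit.
Unset Printing Implicit Defensive.

Import Order.TTheory GRing.Theory Num.Theory.
Local Open Scope ring_scope.
Local Open Scope classical_set_scope.
Local Open Scope complex_scope.

Section QDefs.
Variable R : realType.
Local Notation C := R[i].

Definition adj {m n} (A : 'M[C]_(m, n)) : 'M[C]_(n, m) := (map_mx conjc A)^T.

(* positive semidefinite: v^* A v >= 0 (i.e. real and nonnegative) for all v *)
Definition psd {n} (A : 'M[C]_n) : Prop :=
  forall v : 'cV[C]_n, 0 <= (adj v *m A *m v) 0 0.

Definition density {n} (rho : 'M[C]_n) : Prop := psd rho /\ \tr rho = 1.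

Definition incoherent {n} (rho : 'M[C]_n) : Prop := density rho /\ is_diag_mx rho.

(* positivity of an operator on C^l (x) C^n given as an l x l array of n x n blocks
   X i j  (block (i,j) = (<i| (x) I) X (|j> (x) I)) *)
Definition block_psd {l n} (X : 'I_l -> 'I_l -> 'M[C]_n) : Prop :=
  forall v : 'I_l -> 'cV[C]_n,
    0 <= \sum_(i < l) \sum_(j < l) (adj (v i) *m X i j *m v j) 0 0.

Definition is_linear_map {n m} (N : 'M[C]_n -> 'M[C]_m) : Prop :=
  forall (a : C) (A B : 'M[C]_n), N (a *: A + B) = a *: N A + N B.

Definition completely_positive {n m} (N : 'M[C]_n -> 'M[C]_m) : Prop :=
  forall (l : nat) (X : 'I_l -> 'I_l -> 'M[C]_n),
    block_psd X -> block_psd (fun i j => N (X i j)).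

Definition trace_preserving {n m} (N : 'M[C]_n -> 'M[C]_m) : Prop :=
  forall A : 'M[C]_n, \tr (N A) = \tr A.

Definition channel {n m} (N : 'M[C]_n -> 'M[C]_m) : Prop :=
  [/\ is_linear_map N, completely_positive N & trace_preserving N].

Definition MIO {n m} (N : 'M[C]_n -> 'M[C]_m) : Prop :=
  channel N /\ forall rho : 'M[C]_n, incoherent rho -> incoherent (N rho).

Definition robustness {n} (rho : 'M[C]_n) : R :=
  inf [set s : R | 0 <= s /\ exists tau : 'M[C]_n, density tau /\
         incoherent ((1 + s)^-1%:C *: (rho + s%:C *: tau))].

(* bipartite system B (x) A' with dim B = k, dim A' = d;
   basis vector |j>_B (x) |a>_A' has index mxtens_index (j, a) *)
Definition ptraceB {k d} (X : 'M[C]_(k * d)) : 'M[C]_d :=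
  \matrix_(a < d, b < d) \sum_(j < k) X (mxtens_index (j, a)) (mxtens_index (j, b)).

Definition projB {k d} (j : 'I_k) : 'M[C]_(k * d) :=
  (delta_mx j j : 'M[C]_k) *t (1%:M : 'M[C]_d).

Definition POVM {k d} (E : 'I_k -> 'M[C]_d) : Prop :=
  (forall j, psd (E j)) /\ \sum_(j < k) E j = 1%:M.

Definition Psuc {k d} (p : 'I_k -> R) (rho : 'I_k -> 'M[C]_d) : R :=
  sup [set x : R | exists E : 'I_k -> 'M[C]_d, POVM E /\
         x = complex.Re (\sum_(j < k) (p j)%:C * \tr (E j *m rho j))].

Definition log2 (x : R) : R := ln x / ln 2.

Definition eta_MIO {k d} (p : 'I_k -> R) (rho : 'I_k -> 'M[C]_d) : R :=
  sup [set x : R | exists N : 'M[C]_d -> 'M[C]_(k * d), MIO N /\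
         \sum_(j < k) (p j)%:C * \tr (N (rho j) *m projB j) = (Psuc p rho)%:C /\
         x = \sum_(j < k) p j * robustness (ptraceB (N (rho j)))].

Definition C_MIO {k d} (p : 'I_k -> R) (rho : 'I_k -> 'M[C]_d) : R :=
  log2 (1 + eta_MIO p rho).

Definition spectral {n} (rho : 'M[C]_n) (lam : 'I_n -> R) : Prop :=
  exists U : 'M[C]_n, adj U *m U = 1%:M /\
    rho = U *m diag_mx (\row_i (lam i)%:C) *m adj U.

Definition vN_entropy {n} (rho : 'M[C]_n) : R :=
  match pselect (exists lam, spectral rho lam) with
  | left H => let lam := projT1 (cid H) in - \sum_(i < n) lam i * log2 (lam i)
  | right _ => 0
  end.

Definition ket_proj {d} (psi : 'cV[C]_d) : 'M[C]_d := psi *m adj psi.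

End QDefs.

(* Main.v *)
Require Import Defs.
From HB Require Import structures.
From mathcomp Require Import all_boot all_order all_algebra.
From mathcomp Require Import all_classical all_reals.
From mathcomp Require Import exp.
From mathcomp Require Import complex mxtens.
From mathcomp Require Import ring.
Import Order.TTheory GRing.Theory Num.Theory.
Local Open Scope ring_scope.
Local Open Scope complex_scope.

Set Implicit Arguments.
Unset Strict Implicit.
Unset Printing Implicit Defensive.

Section Aux.
Variable R : realType.
Local Notation C := R[i].

Lemma hadjM m n p (A : 'M[C]_(m, n)) (B : 'M[C]_(n, p)) :
  adj (A *m B) = adj B *m adj A.
Proof. by rewrite /adj map_mxM trmx_mul. Qed.

Lemma hadjK m n (A : 'M[C]_(m, n)) : adj (adj A) = A.
Proof.
by apply/matrixP => i j; rewrite /adj !mxE conjcK.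
Qed.

Lemma hadjD m n (A B : 'M[C]_(m, n)) : adj (A + B) = adj A + adj B.
Proof. by apply/matrixP => i j; rewrite /adj !mxE rmorphD. Qed.

Lemma hadjN m n (A : 'M[C]_(m, n)) : adj (- A) = - adj A.
Proof. by apply/matrixP => i j; rewrite /adj !mxE rmorphN. Qed.

Lemma hadjB m n (A B : 'M[C]_(m, n)) : adj (A - B) = adj A - adj B.
Proof. by rewrite hadjD hadjN. Qed.

Lemma hadj1 n : adj (1%:M : 'M[C]_n) = 1%:M.
Proof. by rewrite /adj map_mx1 trmx1. Qed.

Lemma hadj_delta m n i j : adj (delta_mx i j : 'M[C]_(m, n)) = delta_mx j i.
Proof. by rewrite /adj map_delta_mx trmx_delta. Qed.

Lemma hadjZ m n (c : C) (A : 'M[C]_(m, n)) : adj (c *: A) = conjc c *: adj A.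
Proof. by apply/matrixP => i j; rewrite /adj !mxE rmorphM. Qed.

Lemma hadj_sum m n I (r : seq I) (P : pred I) (F : I -> 'M[C]_(m, n)) :
  adj (\sum_(i <- r | P i) F i) = \sum_(i <- r | P i) adj (F i).
Proof.
apply/matrixP => a b; rewrite /adj !mxE !summxE rmorph_sum.
by apply: eq_bigr => i _; rewrite !mxE.
Qed.

Lemma cV_norm_ge0 n (w : 'cV[C]_n) : 0 <= (adj w *m w) 0 0.
Proof.
rewrite !mxE; apply: sumr_ge0 => i _; rewrite /adj !mxE mulrC.
exact: mulcJ_ge0.
Qed.

Lemma psd_mul_adj m n (B : 'M[C]_(m, n)) : psd (B *m adj B).
Proof.
move=> v.
have -> : adj v *m (B *m adj B) *m v = adj (adj B *m v) *m (adj B *m v)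
  by rewrite hadjM hadjK !mulmxA.
exact: cV_norm_ge0.
Qed.

Lemma qf_delta n (A : 'M[C]_n) i j :
  (adj (delta_mx i ord0 : 'cV[C]_n) *m A *m (delta_mx j ord0 : 'cV[C]_n)) ord0 ord0 = A i j.
Proof. by rewrite hadj_delta -rowE -colE !mxE. Qed.

Lemma psd_diag n (A : 'M[C]_n) i : psd A -> 0 <= A i i.
Proof. by move=> h; have := h (delta_mx i ord0); rewrite qf_delta. Qed.

Lemma psd_tr_ge0 n (A : 'M[C]_n) : psd A -> 0 <= \tr A.
Proof. by move=> h; apply: sumr_ge0 => i _; exact: psd_diag. Qed.

Lemma psdD n (A B : 'M[C]_n) : psd A -> psd B -> psd (A + B).
Proof.
by move=> hA hB v; rewrite mulmxDr mulmxDl mxE addr_ge0.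
Qed.

Lemma psdZ n (c : C) (A : 'M[C]_n) : 0 <= c -> psd A -> psd (c *: A).
Proof.
by move=> hc hA v; rewrite -scalemxAr -scalemxAl mxE mulr_ge0.
Qed.

Lemma psd0 n : psd (0 : 'M[C]_n).
Proof. by move=> v; rewrite mulmx0 mul0mx mxE. Qed.

Lemma psd_sum n I (r : seq I) (P : pred I) (F : I -> 'M[C]_n) :
  (forall i, P i -> psd (F i)) -> psd (\sum_(i <- r | P i) F i).
Proof.
move=> h; elim/big_ind: _ => //; [exact: psd0| exact: psdD].
Qed.

Lemma conjc_i : conjc ((Complex (0:R) 1) : C) = - (Complex (0:R) 1).
Proof. by apply/eqP; rewrite eq_complex /= oppr0 !eqxx. Qed.

Lemma form_zero (x y : C) : (forall c : C, 0 <= c * x + conjc c * y) -> x = 0.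
Proof.
move=> h.
have h1 := h 1; have h2 := h (-1); have h3 := h (Complex (0:R) 1); have h4 := h (- (Complex (0:R) 1)).
rewrite rmorph1 !mul1r in h1.
rewrite rmorphN rmorph1 !mulN1r -opprD oppr_ge0 in h2.
have e1 : x + y = 0 by apply/le_anti; rewrite h1 h2.
have ci : conjc ((Complex (0:R) 1) : C) = - (Complex (0:R) 1).
  by apply/eqP; rewrite eq_complex /= oppr0 !eqxx.
have ci' : conjc (- (Complex (0:R) 1)) = Complex (0:R) 1.
  by apply/eqP; rewrite eq_complex /= !oppr0 opprK !eqxx.
rewrite ci in h3; rewrite ci' in h4.
have e2 : (Complex (0:R) 1) * x - (Complex (0:R) 1) * y = 0.
  apply/le_anti; rewrite -oppr_ge0 opprB.
  have -> : Complex (0:R) 1 * y - Complex (0:R) 1 * x = - Complex (0:R) 1 * x + Complex (0:R) 1 * y by ring.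
  have -> : Complex (0:R) 1 * x - Complex (0:R) 1 * y = Complex (0:R) 1 * x + - Complex (0:R) 1 * y by ring.
  by rewrite h3 h4.
have ei : ((Complex (0:R) 1) : C) != 0 by apply/eqP => /eqP; rewrite eq_complex /= oner_eq0 andbF.
have exy : x = y.
  by apply/eqP; rewrite -subr_eq0 -(mulrI_eq0 _ (lregP ei)) mulrBr e2.
move: e1; rewrite -exy => /eqP; rewrite -mulr2n mulrn_eq0 /= => /eqP //.
Qed.

Lemma qf_expand n (A : 'M[C]_n) (u w : 'cV[C]_n) (c : C) :
  (adj (u + c *: w) *m A *m (u + c *: w)) 0 0 =
  (adj u *m A *m u) 0 0 + c * (adj u *m A *m w) 0 0
  + conjc c * (adj w *m A *m u) 0 0 + conjc c * c * (adj w *m A *m w) 0 0.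
Proof.
rewrite hadjD hadjZ !mulmxDl !mulmxDr -!scalemxAl -!scalemxAr !mxE; ring.
Qed.

Lemma psd_tr0 n (A : 'M[C]_n) : psd A -> \tr A = 0 -> A = 0.
Proof.
move=> hA htr.
have hd : forall i, A i i = 0.
  by move=> i; apply: (psumr_eq0P _ htr) => // j _; exact: psd_diag.
apply/matrixP => a b; rewrite mxE.
have [->|nab] := eqVneq a b; first exact: hd.
apply: (@form_zero _ (A b a)) => c.
have := hA (delta_mx a ord0 + c *: delta_mx b ord0).
by rewrite qf_expand !qf_delta !hd add0r mulr0 addr0.
Qed.

End Aux.

Section Blk.
Variable R : realType.
Local Notation C := R[i].

Definition blk {k d} (l : 'I_k) (X : 'M[C]_(k * d)) : 'M[C]_d :=
  \matrix_(a, b) X (mxtens_index (l, a)) (mxtens_index (l, b)).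

Lemma sum_tens k d (F : 'I_(k * d) -> C) :
  \sum_x F x = \sum_(i < k) \sum_(a < d) F (mxtens_index (i, a)).
Proof.
rewrite pair_big /= (reindex (@mxtens_index k d)) /=.
  by apply: eq_bigr => -[i a].
by exists (@mxtens_unindex k d) => x _; rewrite (mxtens_indexK, mxtens_unindexK).
Qed.

Lemma sum_delta k (l : 'I_k) (F : 'I_k -> C) :
  \sum_(i < k) (i == l)%:R * F i = F l.
Proof.
rewrite (bigD1 l) //= eqxx mul1r big1 ?addr0 // => i /negbTE ->.
by rewrite mul0r.
Qed.

Lemma qf_sum n (A : 'M[C]_n) (v : 'cV[C]_n) :
  (adj v *m A *m v) 0 0 = \sum_y \sum_x conjc (v x 0) * A x y * v y 0.
Proof.
rewrite mxE; apply: eq_bigr => y _; rewrite mxE mulr_suml.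
by apply: eq_bigr => x _; rewrite /adj !mxE.
Qed.

Lemma ptraceB_blk k d (X : 'M[C]_(k * d)) : ptraceB X = \sum_l blk l X.
Proof.
apply/matrixP => a b; rewrite /ptraceB !mxE summxE.
by apply: eq_bigr => l _; rewrite mxE.
Qed.

Lemma tr_blk k d (X : 'M[C]_(k * d)) : \tr X = \sum_l \tr (blk l X).
Proof.
rewrite /mxtrace sum_tens; apply: eq_bigr => l _.
by apply: eq_bigr => a _; rewrite mxE.
Qed.

Lemma blkD k d l (X Y : 'M[C]_(k * d)) : blk l (X + Y) = blk l X + blk l Y.
Proof. by apply/matrixP => a b; rewrite !mxE. Qed.

Lemma blkN k d l (X : 'M[C]_(k * d)) : blk l (- X) = - blk l X.
Proof. by apply/matrixP => a b; rewrite !mxE. Qed.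

Lemma blkB k d l (X Y : 'M[C]_(k * d)) : blk l (X - Y) = blk l X - blk l Y.
Proof. by rewrite blkD blkN. Qed.

Lemma blkZ k d l c (X : 'M[C]_(k * d)) : blk l (c *: X) = c *: blk l X.
Proof. by apply/matrixP => a b; rewrite !mxE. Qed.

Lemma blk_diag k d l (X : 'M[C]_(k * d)) : is_diag_mx X -> is_diag_mx (blk l X).
Proof.
move=> /is_diag_mxP h; apply/is_diag_mxP => a b nab; rewrite mxE; apply: h.
apply: contra nab => /eqP /(congr1 (fun x : nat => (x %% d)%N)) /=.
move=> h2; apply/eqP; move: h2; rewrite /= !modnMDl !modn_small //.
Qed.

Lemma mul_projB k d (X : 'M[C]_(k * d)) j i a x :
  (X *m @projB R k d j) x (mxtens_index (i, a)) = (i == j)%:R * X x (mxtens_index (i, a)).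
Proof.
rewrite mxE sum_tens.
under eq_bigr => i' _ do under eq_bigr => b _ do
  rewrite /projB tensmxE !mxE mulrnAr mulrnAl -mulrnA -mulr_natr.
rewrite (bigD1 j) //= [X in _ + X = _]big1 ?addr0; last first.
  by move=> i' ni'; rewrite (negbTE ni'); apply: big1 => b _; rewrite /= mul0n !mulr0.
rewrite (bigD1 a) //= [X in _ + X = _]big1 ?addr0; last first.
  by move=> b nb; rewrite (negbTE nb) /= muln0 !mulr0.
rewrite !eqxx /= !mul1r muln1 mulrC.
by case: (eqVneq i j) => [->|_]; rewrite ?mul0r.
Qed.

Lemma tr_projB k d (X : 'M[C]_(k * d)) j :
  \tr (X *m @projB R k d j) = \tr (blk j X).
Proof.
rewrite /mxtrace sum_tens.
under eq_bigr => i _ do under eq_bigr => a _ do rewrite mul_projB.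
under eq_bigr => i _ do rewrite -mulr_sumr.
by rewrite sum_delta; apply: eq_bigr => a _; rewrite mxE.
Qed.

Lemma psd_blk k d l (X : 'M[C]_(k * d)) : psd X -> psd (blk l X).
Proof.
move=> hX w.
pose v : 'cV[C]_(k * d) :=
  \col_x (((mxtens_unindex x).1 == l)%:R * w (mxtens_unindex x).2 0).
have := hX v; rewrite !qf_sum sum_tens.
under eq_bigr => i _ do under eq_bigr => a _ do rewrite sum_tens.
have E : forall (p q : C) (x y z : C), p * x * y * (q * z) = q * (p * (x * y * z)).
  by move=> *; ring.
rewrite /v.
under eq_bigr => i _ do under eq_bigr => a _ do under eq_bigr => i0 _ do
  under eq_bigr => a0 _ do rewrite !mxE !mxtens_indexK /= rmorphM rmorph_nat E.
under eq_bigr => i _ do under eq_bigr => a _ do under eq_bigr => i0 _ do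
  rewrite -!mulr_sumr.
under eq_bigr => i _ do under eq_bigr => a _ do rewrite -mulr_sumr sum_delta.
under eq_bigr => i _ do rewrite -mulr_sumr.
rewrite sum_delta.
under [X in _ -> 0 <= X]eq_bigr => y _ do under eq_bigr => x _ do rewrite mxE.
by move=> h; exact: h.
Qed.


End Blk.

Section Chan.
Variable R : realType.
Local Notation C := R[i].
Variables (n m : nat) (N : 'M[C]_n -> 'M[C]_m).
Hypothesis hN : channel N.

Lemma N_add A B : N (A + B) = N A + N B.
Proof. by case: hN => hl _ _; have := hl 1 A B; rewrite !scale1r. Qed.

Lemma N0 : N 0 = 0.
Proof.
have h : N 0 + N 0 = N 0 + 0 by rewrite addr0 -N_add addr0.
exact: addrI h.
Qed.

Lemma N_scale a A : N (a *: A) = a *: N A.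
Proof. by case: hN => hl _ _; have := hl a A 0; rewrite !addr0 N0 addr0. Qed.

Lemma N_opp A : N (- A) = - N A.
Proof. by rewrite -scaleN1r N_scale scaleN1r. Qed.

Lemma N_sub A B : N (A - B) = N A - N B.
Proof. by rewrite N_add N_opp. Qed.

Lemma N_sum I (r : seq I) (P : pred I) (F : I -> 'M[C]_n) :
  N (\sum_(i <- r | P i) F i) = \sum_(i <- r | P i) N (F i).
Proof. exact: (big_morph N N_add N0). Qed.

Lemma N_tr A : \tr (N A) = \tr A.
Proof. by case: hN. Qed.

Lemma N_psd A : psd A -> psd (N A).
Proof.
case: hN => _ hcp _ hA w.
have := hcp 1%N (fun _ _ => A).
have hb : block_psd (fun _ _ : 'I_1 => A).
  by move=> v; rewrite !big_ord1; exact: hA.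
move=> /(_ hb) /(_ (fun _ => w)).
by rewrite !big_ord1.
Qed.

End Chan.

Section Proj.
Variable R : realType.
Local Notation C := R[i].

Lemma psd1 n : psd (1%:M : 'M[C]_n).
Proof. by have := psd_mul_adj (1%:M : 'M[C]_n); rewrite hadj1 mulmx1. Qed.

Lemma diagZ n (c : C) (A : 'M[C]_n) : is_diag_mx A -> is_diag_mx (c *: A).
Proof.
by move=> /is_diag_mxP h; apply/is_diag_mxP => i j nij; rewrite mxE h // mulr0.
Qed.

Lemma MIO_diag1 n m (N : 'M[C]_n -> 'M[C]_m) :
  (0 < n)%N -> MIO N -> is_diag_mx (N 1%:M).
Proof.
move=> n0 [hN hinc].
have nz : (n%:R : C) != 0 by rewrite pnatr_eq0 -lt0n.
have : incoherent ((n%:R : C)^-1 *: (1%:M : 'M[C]_n)).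
  split; last by rewrite scalemx1 scalar_mx_is_diag.
  split; first by apply: psdZ; [rewrite invr_ge0 ler0n | exact: psd1].
  by rewrite mxtraceZ mxtrace1 mulVf.
move=> /hinc [_]; rewrite N_scale // => /(diagZ (n%:R)).
by rewrite scalerA mulfV // scale1r.
Qed.

Lemma psd_compl n (Q : 'M[C]_n) : adj Q = Q -> Q *m Q = Q -> psd (1%:M - Q).
Proof.
move=> hQ hQQ.
have -> : 1%:M - Q = (1%:M - Q) *m adj (1%:M - Q).
  by rewrite hadjB hadj1 hQ mulmxBl !mulmxBr !mul1mx mulmx1 hQQ subrr subr0.
exact: psd_mul_adj.
Qed.

Variables (d k : nat) (psi : 'I_k -> 'cV[C]_d).
Hypothesis hnorm : forall j, adj (psi j) *m psi j = 1%:M.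
Hypothesis horth : forall i j, i != j -> adj (psi i) *m psi j = 0.

Local Notation rho j := (ket_proj (psi j)).

Lemma rho_adj j : adj (rho j) = rho j.
Proof. by rewrite /ket_proj hadjM hadjK. Qed.

Lemma rho_mul i j : rho i *m rho j = if i == j then rho j else 0.
Proof.
rewrite /ket_proj mulmxA -(mulmxA (psi i)).
case: eqVneq => [->|nij]; first by rewrite hnorm mulmx1.
by rewrite horth // mulmx0 mul0mx.
Qed.

Lemma rho_tr j : \tr (rho j) = 1.
Proof. by rewrite /ket_proj mxtrace_mulC hnorm mxtrace1. Qed.

Lemma rho_psd j : psd (rho j).
Proof. exact: psd_mul_adj. Qed.

Definition Pk := \sum_j rho j.

Lemma Pk_adj : adj Pk = Pk.
Proof. by rewrite /Pk hadj_sum; apply: eq_bigr => j _; rewrite rho_adj. Qed.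

Lemma Pk_rho j : Pk *m rho j = rho j.
Proof.
rewrite /Pk mulmx_suml (bigD1 j) //= rho_mul eqxx big1 ?addr0 // => i nij.
by rewrite rho_mul (negbTE nij).
Qed.

Lemma Pk_idem : Pk *m Pk = Pk.
Proof. by rewrite {2}/Pk mulmx_sumr; apply: eq_bigr => j _; rewrite Pk_rho. Qed.

Lemma Pk_tr : \tr Pk = k%:R.
Proof.
rewrite /Pk (big_morph _ (@mxtraceD _ _) (@mxtrace0 _ _)).
by under eq_bigr do rewrite rho_tr; rewrite sumr_const card_ord.
Qed.

Lemma k_le_d : (k <= d)%N.
Proof.
have := psd_tr_ge0 (psd_compl Pk_adj Pk_idem).
by rewrite raddfB /= mxtrace1 Pk_tr subr_ge0 ler_nat.
Qed.

End Proj.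

Section Rob.
Variable R : realType.
Local Notation C := R[i].

Lemma ge0_real (z : C) : 0 <= z -> z = (complex.Re z)%:C.
Proof. by case: z => a b; rewrite lecE /= => /andP [/eqP -> _]. Qed.

Lemma incoh_scale n (M : 'M[C]_n) (m : R) :
  psd M -> is_diag_mx M -> \tr M = m%:C -> 0 < m -> incoherent (m^-1%:C *: M).
Proof.
move=> hM hd htr hm; split; last exact: diagZ.
split; first by apply: psdZ => //; rewrite ler0c invr_ge0 ltW.
by rewrite mxtraceZ htr -rmorphM mulVf ?gt_eqF // rmorph1.
Qed.

Lemma robust_le n (sig M : 'M[C]_n) (m : R) :
  psd sig -> \tr sig = 1 -> psd M -> is_diag_mx M -> psd (M - sig) ->
  \tr M = m%:C -> robustness sig <= m - 1.
Proof.
move=> hs hts hM hd hMs htM.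
have htMs : \tr (M - sig) = (m - 1)%:C by rewrite raddfB /= htM hts rmorphB rmorph1.
have hm1 : 1 <= m.
  by have := psd_tr_ge0 hMs; rewrite htMs ler0c subr_ge0.
have hm0 : 0 < m by apply: lt_le_trans hm1; exact: ltr01.
rewrite /robustness; apply: (ge_inf); first by exists 0 => y [].
split; first by rewrite subr_ge0.
have e1 : 1 + (m - 1) = m by ring.
case: (eqVneq m 1) => [em|nm].
- have eMs : M - sig = 0 by apply: psd_tr0 => //; rewrite htMs em subrr.
  have eM : sig = M by apply/eqP; rewrite eq_sym -subr_eq0 eMs.
  exists M; split.
    by split=> //; rewrite htM em.
  rewrite e1 -eM em subrr rmorph0 scale0r addr0; rewrite -em eM.
  exact: incoh_scale.
- have hm1' : 0 < m - 1 by rewrite subr_gt0 lt_neqAle eq_sym nm hm1.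
  exists ((m - 1)^-1%:C *: (M - sig)); split.
    split; first by apply: psdZ => //; rewrite ler0c invr_ge0 ltW.
    by rewrite mxtraceZ htMs -rmorphM mulVf ?gt_eqF // rmorph1.
  rewrite e1 scalerA -rmorphM mulfV ?gt_eqF // rmorph1 scale1r addrC subrK.
  exact: incoh_scale.
Qed.

End Rob.

Section Main.
Variable R : realType.
Local Notation C := R[i].
Variables (d k : nat) (psi : 'I_k -> 'cV[C]_d).
Hypothesis hk : (0 < k)%N.
Hypothesis hnorm : forall j, adj (psi j) *m psi j = 1%:M.
Hypothesis horth : forall i j, i != j -> adj (psi i) *m psi j = 0.

Local Notation rho j := (ket_proj (psi j)).
Local Notation pk := (((k%:R : R)^-1 : R)).

Lemma kC_neq0 : (k%:R : C) != 0. Proof. by rewrite pnatr_eq0 -lt0n. Qed.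
Lemma kR_gt0 : 0 < (k%:R : R). Proof. by rewrite ltr0n. Qed.

Lemma natmulC (x : R) n : ((x%:C : C) *+ n) = (x *+ n)%:C.
Proof.
elim: n => [|n ih] //; rewrite !mulrS ih.
by apply/eqP; rewrite eq_complex /= addr0 !eqxx.
Qed.

Lemma sum_pk : \sum_(j < k) pk%:C * (1 : C) = 1.
Proof.
have e : (k%:R : C) = (k%:R : R)%:C by rewrite rmorph_nat.
rewrite -mulr_suml mulr1 sumr_const card_ord.
apply: (@eq_trans _ _ ((pk *+ k)%:C)); first exact: natmulC.
have -> : pk *+ k = 1.
  by field; rewrite pnatr_eq0 -lt0n.
by [].
Qed.

Lemma qfB n (A B : 'M[C]_n) (v : 'cV[C]_n) :
  (adj v *m (A - B) *m v) 0 0 = (adj v *m A *m v) 0 0 - (adj v *m B *m v) 0 0.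
Proof. by rewrite mulmxBr mulmxBl !mxE. Qed.

Lemma tr_rho (E : 'M[C]_d) j : \tr (E *m rho j) = (adj (psi j) *m E *m psi j) 0 0.
Proof.
rewrite /ket_proj mulmxA mxtrace_mulC mulmxA /mxtrace big_ord1.
by [].
Qed.

Lemma sumC_le_ub (t : 'I_k -> C) : (forall j, t j <= 1) ->
  complex.Re (\sum_(j < k) pk%:C * t j) <= 1.
Proof.
move=> h.
have : \sum_(j < k) pk%:C * t j <= \sum_(j < k) pk%:C * (1 : C).
  apply: ler_sum => j _; apply: ler_wpM2l; last exact: h.
  by rewrite ler0c invr_ge0 ler0n.
rewrite sum_pk lecE => /andP [_]; by [].
Qed.

Lemma Psuc_one : Psuc (fun _ : 'I_k => pk) (fun j => rho j) = 1.
Proof.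
rewrite /Psuc.
pose S : set R := fun x => exists E : 'I_k -> 'M[C]_d, POVM E /\
         x = complex.Re (\sum_(j < k) pk%:C * \tr (E j *m rho j)).
change (sup S = 1).
have ub : forall x, S x -> x <= 1.
  move=> x [E [[hE hsum] ->]]; apply: sumC_le_ub => j.
  rewrite tr_rho -subr_ge0.
  have -> : (1 : C) = (adj (psi j) *m 1%:M *m psi j) 0 0
    by rewrite mulmx1 hnorm mxE.
  rewrite -qfB.
  have -> : 1%:M - E j = \sum_(i < k | i != j) E i.
    by rewrite -hsum (bigD1 j) //= addrC addrK.
  by apply: psd_sum => i _; exact: hE.
have S1 : S 1.
  pose j0 : 'I_k := Ordinal hk.
  exists (fun j => rho j + ((j == j0)%:R : C) *: (1%:M - Pk psi)); split.
    split.
      move=> j; apply: psdD; first exact: rho_psd.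
      apply: psdZ; first exact: ler0n.
      exact: psd_compl (Pk_adj psi) (Pk_idem hnorm horth).
    rewrite big_split /= -scaler_suml.
    have -> : \sum_(i < k) ((i == j0)%:R : C) = 1.
      by rewrite (bigD1 j0) //= ?eqxx big1 ?addr0 // => i ni; rewrite (negbTE ni).
    by rewrite scale1r addrC subrK.
  have e : forall j, \tr ((rho j + ((j == j0)%:R : C) *: (1%:M - Pk psi)) *m rho j) = 1.
    move=> j; rewrite mulmxDl -scalemxAl mulmxBl mul1mx (Pk_rho hnorm horth).
    by rewrite subrr scaler0 addr0 (rho_mul hnorm horth) eqxx (rho_tr hnorm).
  under eq_bigr => j _ do rewrite e.
  by rewrite sum_pk.
apply/eqP; rewrite eq_le; apply/andP; split.
  by apply: ge_sup; [exists 1 | exact: ub].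
by apply: sup_upper_bound => //; split; [exists 1 | exists 1].
Qed.


Lemma hd0 : (0 < d)%N.
Proof. exact: leq_trans hk (k_le_d hnorm horth). Qed.

Lemma kC_pk : (k%:R : C) * pk%:C = 1.
Proof.
have e : (k%:R : C) = (k%:R : R)%:C by rewrite rmorph_nat.
by rewrite e -rmorphM mulfV ?rmorph1 // gt_eqF // kR_gt0.
Qed.

Lemma eta_bound : eta_MIO (fun _ : 'I_k => pk) (fun j => rho j) <= d%:R / k%:R - 1.
Proof.
rewrite /eta_MIO.
pose T : set R := fun x => exists N : 'M[C]_d -> 'M[C]_(k * d), MIO N /\
  \sum_(j < k) pk%:C * \tr (N (rho j) *m projB R j) =
     (Psuc (fun _ : 'I_k => pk) (fun j => rho j))%:C /\
  x = \sum_(j < k) pk * robustness (ptraceB (N (rho j))).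
change (sup T <= d%:R / k%:R - 1).
have hdk : 1 <= d%:R / k%:R :> R.
  by rewrite ler_pdivlMr ?kR_gt0 // mul1r ler_nat (k_le_d hnorm horth).
have ub : forall x, T x -> x <= d%:R / k%:R - 1.
  move=> x [N [hN [hcond ->]]].
  move: hcond; rewrite Psuc_one => hcond.
  have hch := hN.1.
  pose X j := N (rho j).
  have hX : forall j, psd (X j).
    move=> j; rewrite /X; apply: (N_psd hch). exact: rho_psd.
  have htrX : forall j, \tr (X j) = 1.
    by move=> j; rewrite /X (N_tr hch) (rho_tr hnorm).
  pose tb l j := \tr (blk l (X j)).
  have htb : forall l j, 0 <= tb l j.
    by move=> l j; exact: psd_tr_ge0 (psd_blk l (hX j)).
  have hsumtb : forall j, \sum_l tb l j = 1.
    by move=> j; rewrite /tb -tr_blk htrX.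
  have hle : forall j, tb j j <= 1.
    move=> j; rewrite -(hsumtb j) (bigD1 j) //= lerDl.
    by apply: sumr_ge0 => l _.
  have hc' : \sum_j pk%:C * tb j j = 1.
    have e1 : ((1:R)%:C : C) = 1 by apply/eqP; rewrite eq_complex /= !eqxx.
    apply: (eq_trans _ (eq_trans hcond e1)).
    by apply: eq_bigr => j _; rewrite tr_projB.
  have hsum : \sum_j tb j j = k%:R.
    rewrite -mulr_sumr in hc'.
    by have := congr1 (fun z => (k%:R : C) * z) hc'; rewrite /= mulrA kC_pk mul1r mulr1.
  have hsumjj : \sum_j (1 - tb j j) = 0.
    by rewrite sumrB hsum sumr_const card_ord subrr.
  have hjj : forall j, tb j j = 1.
    have h0 : forall j, 0 <= 1 - tb j j by move=> j; rewrite subr_ge0.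
    move=> j; have := psumr_eq0P (fun i _ => h0 i) hsumjj (i := j) isT.
    by move/eqP; rewrite subr_eq0 eq_sym => /eqP.
  have hoff : forall l j, l != j -> blk l (X j) = 0.
    move=> l j hlj; apply: psd_tr0; first exact: psd_blk.
    have := hsumtb j; rewrite (bigD1 j) //= hjj => hs0.
    have hs : \sum_(i < k | i != j) tb i j = 0.
      by apply: (@addrI _ 1); rewrite addr0.
    exact: (psumr_eq0P (fun i _ => htb i j) hs).
  have hsig : forall j, ptraceB (X j) = blk j (X j).
    move=> j; rewrite ptraceB_blk (bigD1 j) //= big1 ?addr0 //.
    by move=> l hl; exact: hoff.
  pose M j := blk j (N 1%:M).
  have hMd : forall j, is_diag_mx (M j).
    by move=> j; apply: blk_diag; exact: MIO_diag1 hd0 hN.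
  have hMp : forall j, psd (M j).
    by move=> j; apply: psd_blk; apply: (N_psd hch); exact: psd1.
  have hMs : forall j, psd (M j - blk j (X j)).
    move=> j; rewrite /M /X -blkB -(N_sub hch); apply: psd_blk; apply: (N_psd hch).
    apply: psd_compl; first exact: rho_adj.
    by rewrite (rho_mul hnorm horth) eqxx.
  pose m j := complex.Re (\tr (M j)).
  have hm : forall j, \tr (M j) = (m j)%:C.
    by move=> j; apply: ge0_real; exact: psd_tr_ge0.
  have hrob : forall j, robustness (ptraceB (N (rho j))) <= m j - 1.
    move=> j; rewrite -/(X j) hsig; apply: robust_le; last exact: hm.
    - exact: psd_blk.
    - exact: hjj.
    - exact: hMp.
    - exact: hMd.
    - exact: hMs.
  have hsumm : \sum_j m j = d%:R.
    have h1 : \sum_j (m j)%:C = (d%:R : C).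
      under eq_bigr => j _ do rewrite -hm.
      by rewrite /M -tr_blk (N_tr hch) mxtrace1.
    apply: (@complexI R); rewrite rmorph_sum.
    apply: (eq_trans h1); by rewrite rmorph_nat.
  apply: le_trans (ler_sum _ (fun j _ => ler_wpM2l _ (hrob j))) _.
    by rewrite invr_ge0 ler0n.
  rewrite -mulr_sumr sumrB hsumm sumr_const card_ord.
  rewrite le_eqVlt; apply/orP; left; apply/eqP.
  by field; rewrite pnatr_eq0 -lt0n.
case: (pselect (exists x, T x)) => [ne|e]; first exact: ge_sup.
rewrite (_ : T = set0) ?sup0 ?subr_ge0 //.
by apply/seteqP; split => x // hx; case: e; exists x.
Qed.

End Main.

Section Ent.
Variable R : realType.
Local Notation C := R[i].
Variables (d k : nat) (psi : 'I_k -> 'cV[C]_d).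
Hypothesis hk : (0 < k)%N.
Hypothesis hnorm : forall j, adj (psi j) *m psi j = 1%:M.
Hypothesis horth : forall i j, i != j -> adj (psi i) *m psi j = 0.

Local Notation rho j := (ket_proj (psi j)).
Local Notation pk := (((k%:R : R)^-1 : R)).

Lemma log2_ge0 (x : R) : 1 <= x -> 0 <= log2 x.
Proof.
move=> h; rewrite /log2 divr_ge0 ?ln_ge0 //.
by rewrite ler1n.
Qed.

Lemma entropy_le :
  vN_entropy (\sum_(j < k) pk%:C *: rho j) <= log2 (k%:R : R).
Proof.
have hk1 : 1 <= (k%:R : R) by rewrite ler1n.
rewrite /vN_entropy; case: pselect => [H|_]; last exact: log2_ge0.
case: (cid H) => lam /= [U [hU hw]].
set w := \sum_(j < k) pk%:C *: rho j in hw *.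
set D := diag_mx _ in hw.
have hUU : U *m adj U = 1%:M by exact: mulmx1C.
have hD : adj U *m w *m U = D.
  by rewrite hw !mulmxA hU mul1mx -mulmxA hU mulmx1.
have hwP : w = pk%:C *: Pk psi by rewrite /w /Pk scaler_sumr.
have hww : w *m w = pk%:C *: w.
  by rewrite hwP -scalemxAl -scalemxAr (Pk_idem hnorm horth) scalerA.
have hDD : D *m D = pk%:C *: D.
  rewrite -hD -!mulmxA (mulmxA U) hUU mul1mx !mulmxA -(mulmxA _ w w) hww.
  by rewrite -scalemxAr -scalemxAl.
have hlam : forall i, lam i = 0 \/ lam i = pk.
  move=> i; have := congr1 (fun M : 'M[C]_d => M i i) hDD.
  rewrite /D mul_diag_mx !mxE eqxx mulr1n /= -!rmorphM => /complexI /eqP.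
  rewrite -subr_eq0 -mulrBl mulf_eq0 subr_eq0 => /orP [/eqP ->|/eqP ->]; by [right|left].
have hsum : \sum_i lam i = 1.
  have htr : \tr D = 1.
    rewrite -hD mxtrace_mulC mulmxA hUU mul1mx hwP mxtraceZ (Pk_tr hnorm).
    by rewrite mulrC (kC_pk R hk).
  apply: (@complexI R); rewrite rmorph_sum.
  apply: (eq_trans _ (eq_trans htr _)).
    by rewrite /D mxtrace_diag; apply: eq_bigr => i _; rewrite mxE.
  by apply/eqP; rewrite eq_complex /= !eqxx.
have hent : \sum_i lam i * log2 (lam i) = log2 pk.
  transitivity (\sum_i lam i * log2 pk).
    by apply: eq_bigr => i _; case: (hlam i) => ->; rewrite ?mul0r.
  by rewrite -mulr_suml hsum mul1r.
rewrite hent /log2 lnV ?posrE ?(kR_gt0 R hk) // mulNr opprK.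
by [].
Qed.

End Ent.

Unset Implicit Arguments.
Set Strict Implicit.

Theorem theorem1 (R : realType) (d k : nat) (psi : 'I_k -> 'cV[R[i]]_d)
  (hk : (0 < k)%N)
  (hnorm : forall j, adj (psi j) *m psi j = 1%:M)
  (horth : forall i j, i != j -> adj (psi i) *m psi j = 0) :
  let p := fun _ : 'I_k => (k%:R : R)^-1 in
  let rho := fun j => ket_proj (psi j) in
  C_MIO p rho + vN_entropy (\sum_(j < k) (p j)%:C *: rho j) <= log2 (d%:R : R).
Proof.
cbv zeta.
have hE := entropy_le hk hnorm horth.
have heta := eta_bound hk hnorm horth.
have hkd := k_le_d hnorm horth.
have hk0 : 0 < (k%:R : R) by rewrite ltr0n.
have hd0 : 0 < (d%:R : R) by rewrite ltr0n; exact: leq_trans hk hkd.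
have hdk : 1 <= d%:R / k%:R :> R by rewrite ler_pdivlMr // mul1r ler_nat.
have hln2 : 0 < ln (2 : R) by apply: ln_gt0; rewrite ltr1n.
rewrite /C_MIO.
set e := eta_MIO _ _.
have he : e <= d%:R / k%:R - 1 by exact: heta.
have h1 : ln (1 + e) <= ln (d%:R : R) - ln (k%:R : R).
  rewrite -ln_div ?posrE //.
  case: (ltrP 0 (1 + e)) => h.
    by rewrite ler_ln ?posrE ?divr_gt0 // -lerBrDl.
  by rewrite ln0 // ln_ge0.
have h2 : log2 (1 + e) <= log2 (d%:R : R) - log2 (k%:R : R).
  by rewrite /log2 -mulrBl ler_wpM2r // invr_ge0 ltW.
apply: le_trans (lerD h2 hE) _.
by rewrite subrK.
Qed.
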